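(* In the setting below, let $F_1,\dots,F_n\in K_w[\mathcal G\oplus\mathcal H]$ be nonzero, let $f_i$ be the initial term of $F_i$, and assume $j(F_1,\dots,F_n)\ne0$. Let $\Phi=\sum_{\mathbf k\in\mathbb Z^n}\phi_{\mathbf k}\mathbf x^{\mathbf k}$ be a formal series with coefficients $\phi_{\mathbf k}\in K_w[\mathcal G]$. Then $\Phi(x_1,\dots,x_n)\in K_w^{\mathbf f}[\mathcal G\oplus\mathcal H]$ if and only if $\Phi(f_1,\dots,f_n)=\sum_{\mathbf k}\phi_{\mathbf k}f_1^{k_1}\cdots f_n^{k_n}$ strictly converges in $K_w[\mathcal G\oplus\mathcal H]$; and if these equivalent conditions hold, then $\Phi(F_1,\dots,F_n)=\sum_{\mathbf k}\phi_{\mathbf k}F_1^{k_1}\cdots F_n^{k_n}$ strictly converges in $K_w[\mathcal G\oplus\mathcal H]$.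
   Context: $K$ is a field. A totally ordered abelian group (TOA-group) is an abelian group with a translation-invariant total order; for a TOA-group $\mathcal A$, $K_w[\mathcal A]$ is the field of formal series $\sum_{a\in\mathcal A}c_at^a$ ($c_a\in K$) with well-ordered support; $\mathrm{ord}$ of a nonzero series is the minimum of its support, and its initial term is the term of that order. A sum strictly converges if each coefficient receives contributions from only finitely many summands and the resulting series has well-ordered support. Setting: $\mathcal G,\mathcal H$ are abelian groups with $\mathcal H\cong\mathbb Z^n$ having basis $e_1,\dots,e_n$, and $\mathcal G\oplus\mathcal H$ carries a total order making it a TOA-group ($\mathcal G$ gets the induced order). Write $x_i=t^{e_i}$ and $\mathbf x^{\mathbf k}=x_1^{k_1}\cdots x_n^{k_n}$; every element of $K_w[\mathcal G\oplus\mathcal H]$ is $\sum_{\mathbf k\in\mathbb Z^n}b_{\mathbf k}\mathbf x^{\mathbf k}$ with $b_{\mathbf k}\in K_w[\mathcal G]$. The nonzero $b_{\mathbf k}\mathbf x^{\mathbf k}$ are its $x$-terms, and the $x$-initial term is the $x$-term of least order. If $F_i$ has $x$-initial term $a_i\mathbf x^{\mathbf b_i}$ with $\mathbf b_i=(b_{i1},\dots,b_{in})$, the Jacobian number is $j(F_1,\dots,F_n)=\det(b_{ij})$. For an injective endomorphism $\rho$ of $\mathcal G\oplus\mathcal H$, the order $\le^\rho$ is $a\le^\rho b\iff\rho(a)\le\rho(b)$, and $K_w^\rho[\mathcal G\oplus\mathcal H]$ is the field of formal series with support well-ordered with respect to $\le^\rho$. If the initial term of $F_i$ is $c_it^{g_i}\mathbf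 x^{\mathbf b_i}$ ($c_i\in K$, $g_i\in\mathcal G$), then $\mathbf f$ denotes the endomorphism of $\mathcal G\oplus\mathcal H$ fixing $\mathcal G$ pointwise with $e_i\mapsto g_i+\sum_jb_{ij}e_j$ (it is injective when $\det(b_{ij})\ne0$), and $K_w^{\mathbf f}=K_w^\rho$ for $\rho=\mathbf f$. *)

(* Defs.v *)
From HB Require Import structures.
From mathcomp Require Import all_boot all_order all_algebra.
From mathcomp Require Import boolp classical_sets cardinality fsbigop.
Set Implicit Arguments. Unset Strict Implicit. Unset Printing Implicit Defensive.
Import Order.TTheory GRing.Theory Num.Theory.
Local Open Scope ring_scope.
Local Open Scope classical_set_scope.

Definition TOA (A : zmodType) (le : rel A) : Prop :=
  [/\ (forall a, le a a),
      (forall a b, le a b -> le b a -> a = b),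
      (forall a b c, le a b -> le b c -> le a c),
      (forall a b, le a b || le b a)
    & (forall a b c, le a b -> le (a + c) (b + c))].

Definition is_least (A : Type) (le : rel A) (S : set A) (m : A) : Prop :=
  S m /\ (forall y, S y -> le m y).

Definition well_ordered (A : Type) (le : rel A) (S : set A) : Prop :=
  forall T, T `<=` S -> (exists x, T x) -> exists m, is_least le T m.

Definition series (K : fieldType) (A : Type) := A -> K.

Definition supp (K : fieldType) (A : Type) (F : series K A) : set A :=
  [set a | F a != 0].

Definition hahn (K : fieldType) (A : Type) (le : rel A) (F : series K A) : Prop :=
  well_ordered le (supp F).

Section Series.
Variables (K : fieldType) (A : zmodType).

Definition szero : series K A := fun _ => 0.

Definition smono (c : K) (a : A) : series K A := fun b => if b == a then c else 0.

Definition sone : series K A := smono 1 0.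

(* Cauchy product: (F*G)(a) = sum_{b+c=a} F(b) G(c) (finite for Hahn series) *)
Definition smul (F G : series K A) : series K A := fun a =>
  \sum_(p \in [set p : A * A | p.1 + p.2 = a]) (F p.1 * G p.2).

Variable le : rel A.

Definition sinv (F : series K A) : series K A :=
  match pselect (exists G, hahn le G /\ smul F G = sone) with
  | left h => projT1 (cid h)
  | right _ => szero
  end.

Definition spowz (F : series K A) (k : int) : series K A :=
  match k with
  | Posz m => iter m (smul F) sone
  | Negz m => iter m.+1 (smul (sinv F)) sone
  end.

Definition sord (F : series K A) : A :=
  match pselect (exists m, is_least le (supp F) m) with
  | left h => projT1 (cid h)
  | right _ => 0
  end.

Definition sinit (F : series K A) : series K A := smono (F (sord F)) (sord F).

Definition strictly_converges (I : choiceType) (u : I -> series K A) : Prop :=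
  (forall a, finite_set [set i | u i a != 0]) /\
  hahn le (fun a => \sum_(i \in [set i | u i a != 0]) u i a).

End Series.

Section Setting.
Variables (K : fieldType) (G : zmodType) (n : nat).

Definition GH := (G * 'rV[int]_n)%type.

Variable le : rel GH.

Definition leG : rel G := fun g g' => le (g, 0) (g', 0).

(* a series in G, viewed as an element of K_w[G (+) H] (no x-dependence) *)
Definition liftG (c : series K G) : series K GH :=
  fun a => if a.2 == 0 then c a.1 else 0.

Definition xmono (k : 'rV[int]_n) : series K GH := smono 1 ((0 : G), k).

(* the series Phi(x_1,...,x_n) = sum_k phi_k x^k as an element of K^{G (+) H} *)
Definition series_of_coefs (phi : 'rV[int]_n -> series K G) : series K GH :=
  fun a => phi a.2 a.1.

(* Phi(F_1,...,F_n) : the family of summands phi_k F_1^{k_1} ... F_n^{k_n} *)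
Definition subst_terms (phi : 'rV[int]_n -> series K G)
  (F : 'I_n -> series K GH) (k : 'rV[int]_n) : series K GH :=
  smul (liftG (phi k))
       (\big[@smul K _/@sone K _]_(i < n) spowz le (F i) (k ord0 i)).

(* g_i and b_i of the initial term c_i t^{g_i} x^{b_i} of F_i.
   (The H-component of ord F_i is also the exponent of the x-initial term.) *)
Definition init_g (F : series K GH) : G := (sord le F).1.
Definition init_b (F : series K GH) : 'rV[int]_n := (sord le F).2.

Definition bmatrix (F : 'I_n -> series K GH) : 'M[int]_n :=
  \matrix_(i, j) init_b (F i) ord0 j.
Definition jacobian_number (F : 'I_n -> series K GH) : int := \det (bmatrix F).

(* the endomorphism f of G (+) H : identity on G, e_i |-> g_i + sum_j b_ij e_j *)
Definition fendo (F : 'I_n -> series K GH) (a : GH) : GH :=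
  (a.1 + \sum_(i < n) (init_g (F i) *~ a.2 ord0 i), a.2 *m bmatrix F).

Definition le_f (F : 'I_n -> series K GH) : rel GH :=
  fun a b => le (fendo F a) (fendo F b).

End Setting.

(* Main.v *)
Require Import Defs.
From HB Require Import structures.
From mathcomp Require Import all_boot all_order all_algebra.
From mathcomp Require Import boolp classical_sets cardinality fsbigop.
Set Implicit Arguments. Unset Strict Implicit. Unset Printing Implicit Defensive.
Import Order.TTheory GRing.Theory Num.Theory.
Local Open Scope ring_scope.
Local Open Scope classical_set_scope.

Section OrdA.
Variables (A : zmodType) (le : rel A) (Hle : TOA le).

Lemma leR a : le a a. Proof. by case: Hle. Qed.
Lemma leAnti a b : le a b -> le b a -> a = b. Proof. by case: Hle => _ H _ _ _; apply: H. Qed.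
Lemma leT a b c : le a b -> le b c -> le a c. Proof. by case: Hle => _ _ H _ _; apply: H. Qed.
Lemma leTot a b : le a b || le b a. Proof. by case: Hle. Qed.
Lemma leD a b c : le a b -> le (a + c) (b + c). Proof. by case: Hle => _ _ _ _ H; apply: H. Qed.
Lemma leDl a b c : le a b -> le (c + a) (c + b).
Proof. by move=> h; rewrite ![c + _]addrC; apply: leD. Qed.
Lemma leD2 a b c d : le a b -> le c d -> le (a + c) (b + d).
Proof. by move=> h1 h2; apply: leT (leD c h1) (leDl b h2). Qed.
Lemma nleW a b : ~~ le a b -> le b a.
Proof. by have := leTot a b; case: (le a b). Qed.
Lemma ltT a b c : ~~ le a b -> ~~ le b c -> ~~ le a c.
Proof.
move=> h1 h2; apply/negP => h3; move/negP: h1; apply; apply: leT h3 (nleW h2).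
Qed.
Lemma leN a b : le a b -> le (- b) (- a).
Proof.
move=> h; have := leD (- a - b) h.
by rewrite addNKr addrC subrK.
Qed.
Lemma leNl a b : le (- b) (- a) -> le a b.
Proof. by move/leN; rewrite !opprK. Qed.
Definition WO (X : set A) := well_ordered le X.

Lemma WO_sub (X Y : set A) : Y `<=` X -> WO X -> WO Y.
Proof. by move=> YX WX T TY; apply: WX; apply: subset_trans TY YX. Qed.

Lemma wo_subseq (X : set A) (u : nat -> A) : WO X -> (forall i, X (u i)) ->
  exists h : nat -> nat, (forall i j, (i < j)%N -> (h i < h j)%N) /\
    (forall i j, (i <= j)%N -> le (u (h i)) (u (h j))).
Proof.
move=> WX Xu.
have mP : forall i, exists j, (i <= j)%N /\ forall j', (i <= j')%N -> le (u j) (u j').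
  move=> i; have sub : u @` [set j | (i <= j)%N] `<=` X by move=> _ [j _ <-]; apply: Xu.
  have ne : exists x, (u @` [set j | (i <= j)%N]) x by exists (u i); exists i => //=.
  have [m [[j ij <-] mmin]] := WX _ sub ne.
  exists j; split => // j' ij'; apply: mmin; by exists j'.
have [m Hm] := choice mP.
pose h := fix h k := if k is k'.+1 then m (h k').+1 else m 0%N.
have hS k : (h k < h k.+1)%N by rewrite /= ; case: (Hm (h k).+1).
have hC k : le (u (h k)) (u (h k.+1)).
  case: k => [|k] /=.
    by case: (Hm 0%N) => _; apply.
  case: (Hm (h k).+1) => _; apply.
  have h1 : ((h k).+1 <= h k.+1)%N by rewrite /=; case: (Hm (h k).+1).
  exact: leq_trans h1 (ltnW (hS k.+1)).
exists h; split.
  by apply: (homo_ltn (r := fun a b => (a < b)%N)) => // y x z; apply: ltn_trans.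
apply: (homo_leq (f := h) (r := fun a b => le (u a) (u b))) => //.
  by move=> x; apply: leR.
by move=> y x z; apply: leT.
Qed.

Lemma good_wo (X : set A) :
  (forall u : nat -> A, (forall i, X (u i)) -> exists i j, (i < j)%N /\ le (u i) (u j)) ->
  WO X.
Proof.
move=> H T TX [t0 Tt0]; apply: contrapT => nomin.
have step t : exists t', T t -> T t' /\ ~~ le t t'.
  case: (pselect (T t)) => Tt; last by exists t.
  apply: contrapT => nex; apply: nomin; exists t; split => // y Ty.
  apply: contrapT => /negP nle; apply: nex; exists y => _; split => //; exact/negP.
have [nx Hnx] := choice step.
pose u k := iter k nx t0.
have Tu k : T (u k) by elim: k => //= k IH; case: (Hnx _ IH).
have uS k : ~~ le (u k) (u k.+1) by case: (Hnx _ (Tu k)).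
have [i [j [ij le_ij]]] := H u (fun i => TX _ (Tu i)).
have tr : forall y x z, ~~ le x y -> ~~ le y z -> ~~ le x z by move=> y x z; apply: ltT.
by have := homo_ltn (f := u) (r := fun a b => ~~ le a b) tr uS ij; rewrite le_ij.
Qed.

Lemma wo_image (T : Type) (f : T -> A) (X : set T) :
  well_ordered (fun a b => le (f a) (f b)) X <-> WO (f @` X).
Proof.
split=> WX S.
  move=> SX [s Ss]; have [x Xx fx] := SX _ Ss.
  have sub : X `&` (f @^-1` S) `<=` X by move=> ? [].
  have ne : exists y, (X `&` (f @^-1` S)) y by exists x; split => //=; rewrite fx.
  have [m [[Xm Sm] mmin]] := WX _ sub ne.
  exists (f m); split; first exact: Sm.
  move=> y Sy; have [z Xz fz] := SX _ Sy; rewrite -fz; by apply: mmin; split => //=; rewrite fz.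
move=> SX [s Ss].
have sub : f @` S `<=` f @` X by move=> _ [x Sx <-]; exists x => //; apply: SX.
have ne : exists y, (f @` S) y by exists (f s), s.
have [m [[x Sx <-] mmin]] := WX _ sub ne.
exists x; split => // y Sy; apply: mmin; by exists y.
Qed.

Lemma WO_U (X Y : set A) : WO X -> WO Y -> WO (X `|` Y).
Proof.
move=> WX WY T TXY [t Tt].
case: (pselect (exists x, (T `&` X) x)) => [hx|nx];
case: (pselect (exists x, (T `&` Y) x)) => [hy|ny].
- have [m1 [[Tm1 _] m1m]] := WX _ (@subIsetr _ _ _) hx.
  have [m2 [[Tm2 _] m2m]] := WY _ (@subIsetr _ _ _) hy.
  have [m [Tm [mm1 mm2]]] : exists m, T m /\ le m m1 /\ le m m2.
    case/orP: (leTot m1 m2) => h; [exists m1 | exists m2]; by rewrite ?leR.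
  exists m; split => // y Ty; case: (TXY _ Ty) => h.
    by apply: leT mm1 _; apply: m1m.
  by apply: leT mm2 _; apply: m2m.
- have [m1 [[Tm1 _] m1m]] := WX _ (@subIsetr _ _ _) hx.
  exists m1; split => // y Ty; apply: m1m; split => //.
  by case: (TXY _ Ty) => // Yy; exfalso; apply: ny; exists y.
- have [m2 [[Tm2 _] m2m]] := WY _ (@subIsetr _ _ _) hy.
  exists m2; split => // y Ty; apply: m2m; split => //.
  by case: (TXY _ Ty) => // Xy; exfalso; apply: nx; exists y.
- by exfalso; case: (TXY _ Tt) => h; [apply: nx | apply: ny]; exists t.
Qed.

Definition setadd (X Y : set A) : set A := fun a => exists x y, [/\ X x, Y y & a = x + y].

Lemma WO_add (X Y : set A) : WO X -> WO Y -> WO (setadd X Y).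
Proof.
move=> WX WY; apply: good_wo => u Hu.
have [xy Hxy] := choice Hu.
have [p Hp] := choice (fun i => Hxy i).
pose x i := xy i; pose y i := p i.
have Xx i : X (x i) by case: (Hp i).
have Yy i : Y (y i) by case: (Hp i).
have ue i : u i = x i + y i by case: (Hp i).
have [h [hI hC]] := wo_subseq WX Xx.
have [h' [h'I h'C]] := wo_subseq WY (fun i => Yy (h i)).
exists (h (h' 0%N)), (h (h' 1%N)); split.
  by apply: hI; apply: h'I.
rewrite !ue; apply: leD2.
  by apply: hC; apply: ltnW; apply: h'I.
by apply: h'C.
Qed.

Lemma inf_inj (X : set A) : infinite_set X ->
  exists u : nat -> A, (forall i, X (u i)) /\ (forall i j, (i < j)%N -> u i != u j).
Proof.
move=> infX.
have nx (l : seq A) : exists x, X x /\ x \notin l.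
  apply: contrapT => nex; apply: infX; apply: (sub_finite_set _ (finite_seq l)).
  move=> x Xx /=; apply: contrapT => /negP nxl; apply: nex; exists x; split => //; exact/negP.
have [nxt Hn] := choice nx.
pose L := fix L k := if k is k'.+1 then nxt (L k') :: L k' else [::].
exists (fun k => nxt (L k)); split; first by move=> i; case: (Hn (L i)).
have inL i j : (i < j)%N -> nxt (L i) \in L j.
  elim: j => // j IH; rewrite ltnS leq_eqVlt => /orP[/eqP ->|lt].
    by rewrite /= inE eqxx.
  by rewrite /= inE (IH lt) orbT.
move=> i j ij; apply/eqP => e; case: (Hn (L j)) => _ /negP; apply.
by rewrite -e; apply: inL.
Qed.

Lemma finite_pairs (X Y : set A) c : WO X -> WO Y ->
  finite_set [set x | X x /\ Y (c - x)].
Proof.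
move=> WX WY; apply: contrapT => inf.
have [u [Hu uI]] := inf_inj inf.
have Xu i : X (u i) by case: (Hu i).
have [h [hI hC]] := wo_subseq WX Xu.
have Yv i : Y (c - u (h i)) by case: (Hu (h i)).
have [h' [h'I h'C]] := wo_subseq WY Yv.
have l1 := hC _ _ (ltnW (h'I 0%N 1%N erefl)).
have l2 := h'C 0%N 1%N erefl.
have l3 : le (u (h (h' 1%N))) (u (h (h' 0%N))).
  apply: leNl; have := leD (- c) l2.
  by rewrite ![c - _]addrC -!addrA subrr !addr0.
have := uI _ _ (hI _ _ (h'I 0%N 1%N erefl)).
by rewrite (leAnti l1 l3) eqxx.
Qed.

Section Neumann.
Variables (S : set A) (WS : WO S) (Spos : forall s, S s -> ~~ le s 0).

Definition Rl (a : A) (k : nat) := exists l : seq A,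
  [/\ size l = k, (forall x, x \in l -> S x) & a = \sum_(x <- l) x].
Definition Mon (a : A) := exists k, Rl a k.

Lemma Mon0 : Mon 0. Proof. by exists 0%N, [::]; rewrite big_nil. Qed.
Lemma MonS s : S s -> Mon s.
Proof. by move=> Ss; exists 1%N, [:: s]; split => //; [move=> x; rewrite inE => /eqP -> | rewrite big_seq1]. Qed.
Lemma MonD a b : Mon a -> Mon b -> Mon (a + b).
Proof.
move=> [k [l [_ Sl ->]]] [k' [l' [_ Sl' ->]]]; exists (size (l ++ l')), (l ++ l'); split => //.
  by move=> x; rewrite mem_cat => /orP[]; [apply: Sl | apply: Sl'].
by rewrite big_cat.
Qed.
Lemma Mon_ge0 a : Mon a -> le 0 a.
Proof.
move=> [k [l [_ Sl ->]]]; elim: l Sl {k} => [|x l IH] Sl; first by rewrite big_nil leR.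
rewrite big_cons; have h1 : le 0 x by apply: nleW; apply: Spos; apply: Sl; rewrite inE eqxx.
have h2 := IH (fun y yl => Sl y (introT orP (or_intror yl))).
by have := leD2 h1 h2; rewrite addr0.
Qed.

Definition Dec (a : A) := exists u : nat -> A, u 0%N = a /\ forall i, Mon (u i) /\ ~~ le (u i) (u i.+1).

Lemma min_len (P : set A) : (exists b, P b /\ Dec b) ->
  exists b N, [/\ P b, Dec b, Rl b N & forall b' n', P b' -> Dec b' -> Rl b' n' -> (N <= n')%N].
Proof.
move=> [b [Pb Db]].
have ex : exists n, `[< exists b, [/\ P b, Dec b & Rl b n] >].
  case: (Db) => u [u0 Hu]; case: (Hu 0%N) => [[k Rk]] _.
  by exists k; apply/asboolP; exists b; split => //; rewrite -u0.
case: (ex_minnP ex) => N /asboolP [b0 [Pb0 Db0 Rb0]] Nmin.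
exists b0, N; split => // b' n' Pb' Db' Rb'; apply: Nmin; apply/asboolP; by exists b'.
Qed.

Lemma noDec a : ~ Dec a.
Proof.
move=> Da.
have [a0 [N0 [_ Da0 Ra0 _]]] := min_len (P := setT) (ex_intro _ a (conj I Da)).
have nxE (b : A) : exists p : A * nat, Dec b ->
  [/\ ~~ le b p.1, Dec p.1, Rl p.1 p.2 &
     forall b' n', ~~ le b b' -> Dec b' -> Rl b' n' -> (p.2 <= n')%N].
  case: (pselect (Dec b)) => Db; last by exists (b, 0%N).
  have : exists c, ~~ le b c /\ Dec c.
    case: (Db) => u [u0 Hu]; exists (u 1%N); split; first by rewrite -u0; case: (Hu 0%N).
    by exists (fun i => u i.+1); split => // i; apply: Hu.
  move=> /min_len [c [N [Pc Dc Rc Hm]]]; by exists (c, N).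
have [nx Hnx] := choice nxE.
pose aseq k := iter k (fun b => (nx b).1) a0.
pose Nseq k := if k is k'.+1 then (nx (aseq k')).2 else N0.
have Da_k k : Dec (aseq k) by elim: k => //= k IH; case: (Hnx _ IH).
have Ra_k k : Rl (aseq k) (Nseq k) by case: k => //= k; case: (Hnx _ (Da_k k)).
have aS k : ~~ le (aseq k) (aseq k.+1) by case: (Hnx _ (Da_k k)).
have aMin k b' n' : ~~ le (aseq k) b' -> Dec b' -> Rl b' n' -> (Nseq k.+1 <= n')%N.
  move=> h1 h2 h3; case: (Hnx _ (Da_k k)) => _ _ _ H; exact: H h1 h2 h3.
have aMon k : Mon (aseq k) by case: (Da_k k) => u [<- Hu]; case: (Hu 0%N).
have tr : forall y x z, ~~ le x y -> ~~ le y z -> ~~ le x z by move=> y x z; apply: ltT.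
have aC := homo_ltn (f := aseq) (r := fun a b => ~~ le a b) tr aS.
have dec k : exists p : A * A, [/\ S p.1, Rl p.2 (Nseq k).-1, aseq k = p.1 + p.2 & (0 < Nseq k)%N].
  case: (Ra_k k) => [[|s l]] [sz Sl ak].
    exfalso; move: (aS k); rewrite ak big_nil => /nleW h.
    have h2 := Mon_ge0 (aMon k.+1); move: (aS k); rewrite ak big_nil.
    by rewrite (leAnti h h2) leR.
  exists (s, \sum_(x <- l) x); split => //=.
  - by apply: Sl; rewrite inE eqxx.
  - by exists l; split => //; [rewrite -sz | move=> x xl; apply: Sl; rewrite inE xl orbT].
  - by rewrite ak big_cons.
  - by rewrite -sz.
have [sb Hsb] := choice dec.
have Ss i : S (sb i.+1).1 by case: (Hsb i.+1).
have [h [hI hC]] := wo_subseq WS Ss.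
pose v i := (sb (h i).+1).2.
have Dv : Dec (v 0%N).
  exists v; split => // i; split.
    by case: (Hsb (h i).+1) => _ R _ _; exists (Nseq (h i).+1).-1.
  apply/negP => le_v.
  have e1 : aseq (h i).+1 = (sb (h i).+1).1 + v i by case: (Hsb (h i).+1).
  have e2 : aseq (h i.+1).+1 = (sb (h i.+1).+1).1 + v i.+1 by case: (Hsb (h i.+1).+1).
  have hh : ((h i).+1 < (h i.+1).+1)%N by rewrite ltnS; apply: hI.
  have := aC _ _ hh; rewrite e1 e2.
  by rewrite (leD2 (hC _ _ (leqnSn i)) le_v).
have [_ Rv e0 pos] := Hsb (h 0%N).+1.
have lt1 : ~~ le (aseq (h 0%N)) (v 0%N).
  apply: ltT (aS _) _; rewrite e0; apply/negP => hle.
  have := leD (- v 0%N) hle; rewrite /v addrK subrr => hs.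
  have Ss0 : S (sb (h 0%N).+1).1 by case: (Hsb (h 0%N).+1).
  by move: (Spos Ss0); rewrite hs.
have := aMin _ _ _ lt1 Dv Rv.
by case: (Nseq (h 0%N).+1) pos => // m _; rewrite /= ltnn.
Qed.

Lemma WO_Mon : WO Mon.
Proof.
apply: good_wo => u Mu; apply: contrapT => nex; apply: (noDec (a := u 0%N)).
exists u; split => // i; split => //; apply/negP => hle; apply: nex.
by exists i, i.+1; split.
Qed.

End Neumann.

End OrdA.

Section SerA.
Variables (K : fieldType) (A : zmodType) (le : rel A) (Hle : TOA le).

Lemma fsum_nz (I : choiceType) (P : set I) (f : I -> K) :
  \sum_(i \in P) f i != 0 -> exists i, P i /\ f i != 0.
Proof.
move=> h; apply: contrapT => nex; move/eqP: h; apply; apply: fsbig1 => i Pi.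
by apply: contrapT => /eqP fi; apply: nex; exists i.
Qed.

Lemma fsum_single (I : choiceType) (P : set I) (f : I -> K) x :
  P x -> (forall i, P i -> f i != 0 -> i = x) -> \sum_(i \in P) f i = f x.
Proof.
move=> Px H; rewrite -(fsbig_widen [set x] P f); first by rewrite fsbig_set1.
  by move=> y ->.
move=> y [Py nyx]; rewrite /preimage /=; apply: contrapT => /eqP fy; apply: nyx; exact: H.
Qed.

Lemma smul_nz (X Y : series K A) a : smul X Y a != 0 ->
  exists p : A * A, [/\ p.1 + p.2 = a, X p.1 != 0 & Y p.2 != 0].
Proof.
move=> /fsum_nz [p [e h]]; exists p; split => //.
  by apply/eqP => e0; move: h; rewrite e0 mul0r eqxx.
by apply/eqP => e0; move: h; rewrite e0 mulr0 eqxx.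
Qed.

Lemma smul_monol (c : K) (a : A) (Y : series K A) b : smul (smono c a) Y b = c * Y (b - a).
Proof.
rewrite /smul (@fsum_single _ _ _ (a, b - a)) /=.
- by rewrite /smono eqxx.
- by rewrite addrC subrK.
move=> [p1 p2] /= e; rewrite /smono; case: (p1 =P a) => [p1a _|]; last by rewrite mul0r eqxx.
by rewrite -e p1a (addrC a p2) addrK.
Qed.

Lemma smul_monor (c : K) (a : A) (Y : series K A) b : smul Y (smono c a) b = Y (b - a) * c.
Proof.
rewrite /smul (@fsum_single _ _ _ (b - a, a)) /=.
- by rewrite /smono eqxx.
- by rewrite subrK.
move=> [p1 p2] /= e; rewrite /smono; case: (p2 =P a) => [p2a _|]; last by rewrite mulr0 eqxx.
by rewrite -e p2a addrK.
Qed.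

Lemma smono_mul (c d : K) (a b : A) : smul (smono c a) (smono d b) = smono (c * d) (a + b).
Proof.
apply/funext => x; rewrite smul_monol /smono subr_eq (addrC b).
by case: ifP => _; rewrite ?mulr0.
Qed.

Lemma smul1 (X : series K A) : smul X (@sone K A) = X.
Proof. by apply/funext => x; rewrite /sone smul_monor subr0 mulr1. Qed.

Lemma hahn_mono (c : K) (a : A) : hahn le (smono c a).
Proof.
move=> T Tsub [t Tt].
have ea y : T y -> y = a.
  by move=> Ty; have := Tsub _ Ty; rewrite /supp /= /smono; case: (y =P a) => //; rewrite eqxx.
exists a; split; first by rewrite -(ea _ Tt).
by move=> y /ea ->; apply: leR.
Qed.

Lemma sinv_mono (c : K) (a : A) : c != 0 -> sinv le (smono c a) = smono c^-1 (- a).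
Proof.
move=> c0; rewrite /sinv; case: pselect => [h|nh]; last first.
  exfalso; apply: nh; exists (smono c^-1 (-a)); split; first exact: hahn_mono.
  by rewrite smono_mul mulfV // subrr.
case: cid => Gs [_ HG] /=.
apply/funext => x.
have := congr1 (fun Z => Z (x + a)) HG; rewrite /= smul_monol addrK /sone /smono addr_eq0.
move=> hh; apply: (mulfI c0); rewrite hh; case: ifP => _; by rewrite ?mulfV ?mulr0.
Qed.

Lemma iter_mono (c : K) (a : A) m : c != 0 ->
  exists d, d != 0 /\ iter m (smul (smono c a)) (@sone K A) = smono d (a *+ m).
Proof.
move=> c0; elim: m => [|m [d [d0 IH]]]; first by exists 1; rewrite oner_neq0 mulr0n.
exists (c * d); split; first by rewrite mulf_neq0.
by rewrite /= IH smono_mul mulrS.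
Qed.

Lemma spowz_mono (c : K) (a : A) k : c != 0 ->
  exists d, d != 0 /\ spowz le (smono c a) k = smono d (a *~ k).
Proof.
move=> c0; case: k => m; rewrite /spowz.
  by rewrite -pmulrn; apply: iter_mono.
rewrite sinv_mono //; have [d [d0 ->]] := iter_mono (-a) m.+1 (invr_neq0 c0).
by exists d; split => //; rewrite NegzE mulrNz -pmulrn mulNrn.
Qed.

Definition inTr (M : set A) (X : series K A) (a : A) := forall b, X b != 0 -> M (b - a).

Variables (M : set A) (M0 : M 0) (MD : forall x y, M x -> M y -> M (x + y)).

Lemma inTr_mul X Y a b : inTr M X a -> inTr M Y b -> inTr M (smul X Y) (a + b).
Proof.
move=> hX hY x /smul_nz [[p1 p2] [/= e X1 Y2]].
have := MD (hX _ X1) (hY _ Y2).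
by rewrite -e opprD addrACA.
Qed.

Lemma inTr_one : inTr M (@sone K A) 0.
Proof. by move=> b; rewrite /sone /smono; case: (b =P 0) => [-> _|]; rewrite ?subrr ?eqxx. Qed.

Lemma inTr_iter X a m : inTr M X a -> inTr M (iter m (smul X) (@sone K A)) (a *+ m).
Proof.
move=> hX; elim: m => [|m IH] /=; first by rewrite mulr0n; apply: inTr_one.
by rewrite mulrS; apply: inTr_mul.
Qed.

Lemma inTr_inv (X : series K A) o : hahn le X -> X o != 0 ->
  (forall y, X y != 0 -> le o y) -> inTr M X o -> inTr M (sinv le X) (- o).
Proof.
move=> hX Xo omin hM.
rewrite /sinv; case: pselect => [h|_]; last by move=> b; rewrite eqxx.
case: cid => Gs [hG HG] /= b Gb; apply: contrapT => nb.
have sub : [set y | Gs y != 0 /\ ~ M (y - - o)] `<=` supp Gs by move=> y [].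
have ne : exists y, [set y | Gs y != 0 /\ ~ M (y - - o)] y by exists b.
have [m [[Gm nMm] mmin]] := hG _ sub ne.
have key : smul X Gs (o + m) = X o * Gs m.
  rewrite /smul (@fsum_single _ _ _ (o, m)) //= => -[p1 p2] /= e.
  rewrite mulf_eq0 negb_or => /andP[X1 G2].
  have p2e : p2 = o + m - p1 by rewrite -e (addrC p1) addrK.
  case: (boolP (p1 == o)) => [/eqP p1o|p1o].
    by rewrite p2e p1o addrC addKr.
  exfalso.
  have lt1 : ~~ le p1 o.
    by apply/negP => h1; move/negP: p1o; apply; apply/eqP; apply: (leAnti Hle h1 (omin _ X1)).
  have lt2 : ~~ le m p2.
    apply/negP => h2; have := leDl Hle p1 h2; rewrite e => h3.
    move/negP: lt1; apply; have := leD Hle (- m) h3; by rewrite !addrK.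
  have Mp2 : M (p2 - - o).
    apply: contrapT => nM; move/negP: lt2; apply; apply: mmin; split => //.
  have := MD Mp2 (hM _ X1); rewrite !opprK.
  have -> : p2 + o + (p1 - o) = m + o by rewrite addrA (addrAC p2 o p1) addrK (addrC p2) e addrC.
  by rewrite opprK in nMm.
have := congr1 (fun Z => Z (o + m)) HG; rewrite /= key /sone /smono.
case: eqP => [e _|_ /eqP]; last by rewrite mulf_eq0 (negbTE Xo) (negbTE Gm).
by apply: nMm; rewrite opprK addrC e.
Qed.

End SerA.

Lemma sord_least (K : fieldType) (A : zmodType) (le : rel A) (X : series K A) :
  hahn le X -> X <> @szero K A -> is_least le (supp X) (sord le X).
Proof.
move=> hX nz; rewrite /sord; case: pselect => [h|nh]; first by case: cid.
exfalso; apply: nh; apply: hX => //; apply: contrapT => ne; apply: nz.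
apply/funext => a; apply: contrapT => /eqP na; apply: ne; by exists a.
Qed.

Section Main.
Variables (K : fieldType) (G : zmodType) (n : nat) (le : rel (GH G n)) (Hle : TOA le)
  (F : 'I_n -> series K (GH G n)) (HF : forall i, hahn le (F i))
  (HFnz : forall i, F i <> @szero K _) (Hj : jacobian_number le F != 0)
  (phi : 'rV[int]_n -> series K G).
Local Notation A := (GH G n).

Let o i := sord le (F i).
Let oL i : is_least le (supp (F i)) (o i) := sord_least (@HF i) (@HFnz i).
Lemma c0 i : F i (o i) != 0. Proof. by case: (oL i). Qed.

Definition vk (k : 'rV[int]_n) : A := \sum_(i < n) o i *~ k ord0 i.

Lemma fendoE g k : fendo le F (g, k) = (g, 0) + vk k.
Proof.
have e1 : (vk k).1 = \sum_(i<n) init_g le (F i) *~ k ord0 i.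
  by rewrite raddf_sum; apply: eq_bigr => i _; rewrite raddfMz.
have e2 : (vk k).2 = k *m bmatrix le F.
  rewrite raddf_sum; apply/rowP => j; rewrite mxE summxE; apply: eq_bigr => i _.
  by rewrite raddfMz -scaler_int mxE intz mxE mulrC.
move: e1 e2; case: (vk k) => s1 s2 /= -> ->.
rewrite /fendo /=. have pe (x y : A) : x + y = (x.1 + y.1, x.2 + y.2) by []. by rewrite pe /= add0r.
Qed.

Lemma Binj (k k' : 'rV[int]_n) : k *m bmatrix le F = k' *m bmatrix le F -> k = k'.
Proof.
move=> e; apply/eqP; rewrite -subr_eq0; apply/eqP.
have : (k - k') *m bmatrix le F = 0 by rewrite mulmxBl e subrr.
move=> /(congr1 (fun v => v *m \adj (bmatrix le F))).
rewrite mul0mx -mulmxA mul_mx_adj mul_mx_scalar.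
have Hj' : \det (bmatrix le F) != 0 := Hj.
move/eqP; rewrite scalemx_eq0 (negbTE Hj') /=.
by move/eqP.
Qed.

Let f := fun i => sinit le (F i).
Let T := subst_terms le phi f.

Lemma prod_f (k : 'rV[int]_n) : exists d, d != 0 /\
  \big[@smul K _/@sone K _]_(i < n) spowz le (f i) (k ord0 i) = smono d (vk k).
Proof.
rewrite /vk; apply: (big_rec2 (fun X a => exists d, d != 0 /\ X = smono d a)).
  by exists 1; rewrite oner_neq0.
move=> i y1 y2 _ [d [d0 ->]].
have [d' [d'0 ->]] := spowz_mono Hle (o i) (k ord0 i) (c0 i).
by exists (d' * d); rewrite mulf_neq0 // smono_mul.
Qed.

Lemma T_nz k b : T k b != 0 <-> exists g, phi k g != 0 /\ b = fendo le F (g, k).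
Proof.
have [d [d0 hd]] := prod_f k.
rewrite /T /subst_terms hd smul_monor mulf_eq0 (negbTE d0) orbF.
rewrite /liftG; split.
  case: ((b - vk k).2 =P 0) => [e2 h|]; last by rewrite eqxx.
  exists (b - vk k).1; split => //.
  rewrite fendoE; apply: (addIr (- vk k)); rewrite addrK.
  by move: e2; case: (b - vk k) => x y /= ->.
move=> [g [pg ->]]; rewrite fendoE addrK /= eqxx //.
Qed.

Lemma T_uniq k k' b : T k b != 0 -> T k' b != 0 -> k = k'.
Proof.
move=> /T_nz [g [_ e]] /T_nz [g' [_ e']].
by apply: Binj; have := congr1 snd (etrans (esym e) e').
Qed.

Definition suppPhi : set A := supp (series_of_coefs phi).

Lemma sumT_nz b : \sum_(k \in [set k | T k b != 0]) T k b != 0 <->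
  exists g k, phi k g != 0 /\ b = fendo le F (g, k).
Proof.
split.
  by move=> /fsum_nz [k [_ /T_nz [g [pg e]]]]; exists g, k.
move=> [g [k [pg e]]].
have Tk : T k b != 0 by apply/T_nz; exists g.
rewrite (@fsum_single _ _ _ _ k) // => k' Tk' _; exact: T_uniq Tk' Tk.
Qed.

Lemma T_fin b : finite_set [set k | T k b != 0].
Proof.
case: (pselect (exists k, T k b != 0)) => [[k Tk]|nk].
  apply: (sub_finite_set _ (finite_set1 k)) => k' Tk'; exact: T_uniq Tk' Tk.
apply: (sub_finite_set _ (finite_set1 (0 : 'rV[int]_n))) => k' Tk'.
by exfalso; apply: nk; exists k'.
Qed.

Lemma image_eq :
  (supp (fun b => \sum_(k \in [set k | T k b != 0]) T k b) `<=` fendo le F @` suppPhi) /\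
  (fendo le F @` suppPhi `<=` supp (fun b => \sum_(k \in [set k | T k b != 0]) T k b)).
Proof.
split.
  move=> b /sumT_nz [g [k [pg ->]]]; by exists (g, k).
move=> _ [[g k] pg <-]; rewrite /supp /=; apply/sumT_nz; by exists g, k.
Qed.

Lemma part1 : hahn (le_f le F) (series_of_coefs phi) <-> strictly_converges le T.
Proof.
rewrite /strictly_converges /hahn /le_f; split.
  move=> /wo_image h; split; first exact: T_fin.
  by apply: (WO_sub image_eq.1).
move=> [_ h]; apply/wo_image; by apply: (WO_sub image_eq.2).
Qed.

Let Si (i : 'I_n) : set A := fun a => F i (a + o i) != 0 /\ a != 0.
Let Sall : set A := fun a => exists i, Si i a.
Let M := Mon Sall.

Lemma Spos a : Sall a -> ~~ le a 0.
Proof.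
move=> [i [Fa a0]]; apply/negP => la.
have h1 : le (o i) (a + o i) by case: (oL i) => _; apply.
have h2 : le 0 a by have := leD Hle (- o i) h1; rewrite subrr addrK.
by move/negP: a0; apply; apply/eqP; apply: (leAnti Hle la h2).
Qed.

Lemma WO_Si i : WO le (Si i).
Proof.
have sub : Si i `<=` (fun b => b - o i) @` supp (F i).
  by move=> a [Fa _]; exists (a + o i) => //; rewrite addrK.
apply: WO_sub sub _; apply/(wo_image le (fun b : A => b - o i)) => Z ZX [t Zt].
have [m [Zm mm]] := @HF i Z ZX (ex_intro _ t Zt).
by exists m; split => // y Zy; apply: (leD Hle); apply: mm.
Qed.

Lemma WO_Sall : WO le Sall.
Proof.
have H (r : seq 'I_n) : WO le (fun a => exists2 i, i \in r & Si i a).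
  elim: r => [|i r IH].
    by move=> Z ZX [t Zt]; case: (ZX _ Zt).
  apply: (WO_sub (X := Si i `|` (fun a => exists2 i, i \in r & Si i a))).
    move=> a [j]; rewrite inE => /orP[/eqP -> h|jr h]; [by left | by right; exists j].
  by apply: WO_U => //; apply: WO_Si.
apply: (WO_sub _ (H (enum 'I_n))) => a [i h]; exists i => //; by rewrite mem_enum.
Qed.

Let WM : WO le M := WO_Mon Hle WO_Sall Spos.
Let M0 : M 0 := Mon0 Sall.
Let MD : forall x y, M x -> M y -> M (x + y) := fun x y => @MonD _ Sall x y.

Lemma Fi_in i : inTr M (F i) (o i).
Proof.
move=> b Fb; case: (boolP (b == o i)) => [/eqP ->|bo]; first by rewrite subrr.
apply: MonS; exists i; split; first by rewrite subrK.
by rewrite subr_eq0.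
Qed.

Lemma spow_in i (m : int) : inTr M (spowz le (F i) m) (o i *~ m).
Proof.
case: m => m; rewrite /spowz.
  by rewrite -pmulrn; apply: inTr_iter => //; apply: Fi_in.
rewrite NegzE mulrNz -pmulrn -mulNrn; apply: inTr_iter => //.
apply: (inTr_inv Hle) => //; first exact: c0.
  by move=> y Fy; case: (oL i) => _; apply.
exact: Fi_in.
Qed.

Lemma prod_in (k : 'rV[int]_n) :
  inTr M (\big[@smul K _/@sone K _]_(i < n) spowz le (F i) (k ord0 i)) (vk k).
Proof.
rewrite /vk; apply: (big_rec2 (fun X a => inTr M X a)); first exact: inTr_one.
by move=> i y1 y2 _ h; apply: inTr_mul => //; apply: spow_in.
Qed.

Let TF := subst_terms le phi F.

Lemma TF_nz k b : TF k b != 0 -> exists g, phi k g != 0 /\ M (b - fendo le F (g, k)).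
Proof.
move=> /smul_nz [[p1 p2] [/= e L P]].
move: L; rewrite /liftG; case: (p1.2 =P 0) => [p12 pg|]; last by rewrite eqxx.
exists p1.1; split => //.
have := prod_in P; rewrite fendoE -e.
have -> : p1 = (p1.1, 0) by apply: injective_projections => //=.
by rewrite opprD addrACA subrr add0r.
Qed.

Lemma part2 : hahn (le_f le F) (series_of_coefs phi) -> strictly_converges le TF.
Proof.
rewrite /hahn /le_f => /(wo_image le (fendo le F)) WW.
have kP (w : A) : exists k : 'rV[int]_n,
    (exists k', w.2 = k' *m bmatrix le F) -> w.2 = k *m bmatrix le F.
  case: (pselect (exists k', w.2 = k' *m bmatrix le F)) => [[k' e]|nk]; first by exists k'.
  by exists 0 => h; exfalso; apply: nk.
have [kof hkof] := choice kP.
split.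
  move=> b.
  apply: (sub_finite_set _ (finite_image kof (finite_pairs Hle b WW WM))).
  move=> k /= /TF_nz [g [pg Mb]].
  exists (fendo le F (g, k)); first by split => //; exists (g, k).
  have e := hkof (fendo le F (g, k)) (ex_intro _ k erefl).
  by apply: Binj; rewrite -e.
refine (WO_sub (X := setadd (fendo le F @` suppPhi) M) _ (WO_add Hle WW WM)).
move=> b /fsum_nz [k [_ /TF_nz [g [pg Mb]]]].
exists (fendo le F (g, k)), (b - fendo le F (g, k)); split => //.
by rewrite addrC subrK.
Qed.

End Main.

Theorem mainTheorem5 (K : fieldType) (G : zmodType) (n : nat)
  (le : rel (GH G n)) (Hle : TOA le)
  (F : 'I_n -> series K (GH G n))
  (HF : forall i, hahn le (F i))
  (HFnz : forall i, F i <> @szero K _)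
  (Hj : jacobian_number le F != 0)
  (phi : 'rV[int]_n -> series K G)
  (Hphi : forall k, hahn (leG le) (phi k)) :
  let f := fun i => sinit le (F i) in
  (hahn (le_f le F) (series_of_coefs phi) <->
     strictly_converges le (subst_terms le phi f)) /\
  (hahn (le_f le F) (series_of_coefs phi) ->
     strictly_converges le (subst_terms le phi F)).
Proof.
move=> f; split.
  exact: (part1 Hle HF HFnz Hj phi).
exact: (part2 Hle HF HFnz Hj).
Qed.
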